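(* Let $f:\mathbb{R}^d\to\mathbb{R}$ be twice differentiable with $L$-Lipschitz Hessian. Let $x,g\in\mathbb{R}^d$, $H\in\mathbb{R}^{d\times d}$ symmetric, $M\ge L$, let $x^+$ be a global minimizer of $y\mapsto\Omega_{M,g,H}(y,x)$ and $r:=\|x^+-x\|$. Then $$ \frac{1}{\sqrt{M}}\|\nabla f(x^+)\|^{3/2}\;\le\;3Mr^3+\frac{2}{\sqrt{M}}\|\nabla f(x)-g\|^{3/2}+\frac{1}{M^2}\|\nabla^2 f(x)-H\|^3 . $$
   Context: $\|\cdot\|$ is the Euclidean norm on vectors and the spectral norm on symmetric matrices. The Hessian of $f$ is $L$-Lipschitz means $\|\nabla^2 f(x)-\nabla^2 f(y)\|\le L\|x-y\|$ for all $x,y$. For $M>0$, $g\in\mathbb{R}^d$ and symmetric $H$, $\Omega_{M,g,H}(y,x):=\langle g,y-x\rangle+\frac12\langle H(y-x),y-x\rangle+\frac{M}{6}\|y-x\|^3$. *)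

(* Defs.v *)
From HB Require Import structures.
From mathcomp Require Import all_boot all_order all_algebra.
From mathcomp Require Import all_classical all_reals all_analysis.
Set Implicit Arguments. Unset Strict Implicit. Unset Printing Implicit Defensive.
Import Order.TTheory GRing.Theory Num.Theory.
Import numFieldNormedType.Exports.
Local Open Scope classical_set_scope.
Local Open Scope ring_scope.

Definition edot {R : realType} {d : nat} (u v : 'cV[R]_d) : R :=
  \sum_(i < d) u i 0 * v i 0.

Definition enorm {R : realType} {d : nat} (u : 'cV[R]_d) : R :=
  Num.sqrt (edot u u).

Definition spnorm {R : realType} {d : nat} (A : 'M[R]_d) : R :=
  sup [set enorm (A *m u) | u in [set u : 'cV[R]_d | enorm u <= 1]].

Definition Omega {R : realType} {d : nat} (M : R) (g : 'cV[R]_d) (H : 'M[R]_d)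
  (y x : 'cV[R]_d) : R :=
  edot g (y - x) + 2^-1 * edot (H *m (y - x)) (y - x)
  + M / 6 * enorm (y - x) ^+ 3.

Definition is_gradient {R : realType} {d : nat} (f : 'cV[R]_d -> R)
  (grad : 'cV[R]_d -> 'cV[R]_d) : Prop :=
  forall x, differentiable f x /\ ('d f x : 'cV[R]_d -> R) = (fun h => edot (grad x) h).

Definition is_hessian {R : realType} {d : nat} (grad : 'cV[R]_d -> 'cV[R]_d)
  (hess : 'cV[R]_d -> 'M[R]_d) : Prop :=
  forall x, differentiable grad x /\
            ('d grad x : 'cV[R]_d -> 'cV[R]_d) = (fun h => hess x *m h).

(* Main.v *)
Require Import Defs.
From HB Require Import structures.
From mathcomp Require Import all_boot all_order all_algebra.
From mathcomp Require Import all_classical all_reals all_analysis.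
From mathcomp Require Import ring lra.
Import Order.TTheory GRing.Theory Num.Theory.
Import numFieldNormedType.Exports.
Local Open Scope classical_set_scope.
Local Open Scope ring_scope.

Section Vec.
Context {R : realType} {d : nat}.
Implicit Types u v w : 'cV[R]_d.

Lemma edotC u v : edot u v = edot v u.
Proof. by apply: eq_bigr => i _; rewrite mulrC. Qed.

Lemma edotDl u v w : edot (u + v) w = edot u w + edot v w.
Proof. by rewrite /edot -big_split; apply: eq_bigr => i _; rewrite mxE mulrDl. Qed.

Lemma edotDr u v w : edot w (u + v) = edot w u + edot w v.
Proof. by rewrite !(edotC w) edotDl. Qed.

Lemma edotZl (a : R) u v : edot (a *: u) v = a * edot u v.
Proof. by rewrite /edot mulr_sumr; apply: eq_bigr => i _; rewrite mxE mulrA. Qed.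

Lemma edotZr (a : R) u v : edot v (a *: u) = a * edot v u.
Proof. by rewrite !(edotC v) edotZl. Qed.

Lemma edotNl u v : edot (- u) v = - edot u v.
Proof. by rewrite -scaleN1r edotZl mulN1r. Qed.

Lemma edotNr u v : edot v (- u) = - edot v u.
Proof. by rewrite !(edotC v) edotNl. Qed.

Lemma edotBl u v w : edot (u - v) w = edot u w - edot v w.
Proof. by rewrite edotDl edotNl. Qed.

Lemma edotBr u v w : edot w (u - v) = edot w u - edot w v.
Proof. by rewrite edotDr edotNr. Qed.

Lemma edot0l v : edot 0 v = 0.
Proof. by rewrite /edot big1 // => i _; rewrite mxE mul0r. Qed.

Lemma edot_ge0 u : 0 <= edot u u.
Proof. by apply: sumr_ge0 => i _; rewrite -expr2 sqr_ge0. Qed.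

Lemma edot_eq0 u : edot u u = 0 -> u = 0.
Proof.
move=> /eqP; rewrite /edot psumr_eq0; last by move=> i _; rewrite -expr2 sqr_ge0.
move=> /allP h; apply/matrixP => i j; rewrite (ord1 j) mxE.
by have /(_ (mem_index_enum i)) := h i; rewrite -expr2 sqrf_eq0 => /eqP.
Qed.

Lemma enorm_ge0 u : 0 <= enorm u.
Proof. exact: sqrtr_ge0. Qed.

Lemma enorm_sq u : enorm u ^+ 2 = edot u u.
Proof. by rewrite sqr_sqrtr // edot_ge0. Qed.

Lemma edot_CS u v : edot u v ^+ 2 <= edot u u * edot v v.
Proof.
set p := edot u v; set a := edot u u; set b := edot v v.
have hb : 0 <= b := edot_ge0 v.
have := edot_ge0 (b *: u - p *: v).
rewrite !edotBl !edotBr !edotZl !edotZr -/a -/b -/p (edotC v u) -/p.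
case: (ltrgtP b 0) => hb0; first by move: hb; rewrite leNgt hb0.
  move=> h.
  have e : b * (b * a) - b * (p * p) - (p * (b * p) - p * (p * b)) = b * (a * b - p ^+ 2) by ring.
  rewrite e pmulr_rge0 // in h; lra.
move=> _. have v0 : v = 0 by apply: edot_eq0.
by rewrite /p v0 edotC edot0l hb0 expr0n mulr0.
Qed.

Lemma sq_le_aux (x y : R) : 0 <= y -> x ^+ 2 <= y ^+ 2 -> x <= y.
Proof. move=> hy h; nra. Qed.

Lemma edot_le u v : edot u v <= enorm u * enorm v.
Proof.
apply: sq_le_aux; first by rewrite mulr_ge0 ?enorm_ge0.
by rewrite exprMn !enorm_sq edot_CS.
Qed.

Lemma enormD u v : enorm (u + v) <= enorm u + enorm v.
Proof.
have h := edot_le u v.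
have h0 := enorm_sq (u + v).
rewrite edotDl !edotDr (edotC v u) -!enorm_sq in h0.
have := enorm_ge0 u; have := enorm_ge0 v; have := enorm_ge0 (u + v).
nra.
Qed.

Lemma enormZ (a : R) u : enorm (a *: u) = `|a| * enorm u.
Proof.
by rewrite /enorm edotZl edotZr mulrA -expr2 sqrtrM ?sqr_ge0 // sqrtr_sqr.
Qed.

Lemma enormN u : enorm (- u) = enorm u.
Proof. by rewrite -scaleN1r enormZ normrN normr1 mul1r. Qed.

Lemma enorm0 : enorm (0 : 'cV[R]_d) = 0.
Proof. by rewrite /enorm edot0l sqrtr0. Qed.

Lemma enormB u v : enorm (u - v) <= enorm u + enorm v.
Proof. by rewrite -(enormN v) enormD. Qed.


Lemma edot_mulmx (A : 'M[R]_d) u v : edot (A *m u) v = edot u (A^T *m v).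
Proof.
rewrite /edot; under eq_bigr do rewrite mxE big_distrl.
rewrite exchange_big; apply: eq_bigr => j _; rewrite mxE big_distrr.
by apply: eq_bigr => i _ /=; rewrite !mxE mulrCA mulrA.
Qed.

Lemma mulmx_coord (A : 'M[R]_d) u i : (A *m u) i 0 = edot (row i A)^T u.
Proof. by rewrite mxE; apply: eq_bigr => j _; rewrite !mxE. Qed.

Lemma mulmx_sq_bound (A : 'M[R]_d) u :
  edot (A *m u) (A *m u) <= (\sum_(i < d) edot (row i A)^T (row i A)^T) * edot u u.
Proof.
rewrite [X in X <= _]/edot big_distrl; apply: ler_sum => i _.
by rewrite mulmx_coord -expr2 edot_CS.
Qed.

Lemma spnorm_hassup (A : 'M[R]_d) :
  has_sup [set enorm (A *m u) | u in [set u : 'cV[R]_d | enorm u <= 1]].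
Proof.
split.
  exists (enorm (A *m 0)); exists 0 => //=; rewrite enorm0 ler01 //.
exists (Num.sqrt (\sum_(i < d) edot (row i A)^T (row i A)^T)).
move=> y [u /= hu <-]; rewrite /enorm; apply: ler_wsqrtr.
apply: (le_trans (mulmx_sq_bound A u)).
have hB : 0 <= \sum_(i < d) edot (row i A)^T (row i A)^T.
  by apply: sumr_ge0 => i _; exact: edot_ge0.
have hu2 : edot u u <= 1.
  rewrite -enorm_sq; have := enorm_ge0 u; nra.
have := edot_ge0 u; nra.
Qed.

Lemma spnorm_ge0 (A : 'M[R]_d) : 0 <= spnorm A.
Proof.
have h := sup_upper_bound (spnorm_hassup A).
apply: le_trans (h (enorm (A *m 0)) _); first exact: enorm_ge0.
by exists 0; rewrite /= ?enorm0 ?ler01.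
Qed.

Lemma spnorm_le (A : 'M[R]_d) u : enorm (A *m u) <= spnorm A * enorm u.
Proof.
have [u0|] := eqVneq (edot u u) 0.
  by rewrite (edot_eq0 u u0) mulmx0 enorm0 mulr0.
move=> un0.
have hn : 0 < enorm u by rewrite lt_def enorm_ge0 andbT sqrtr_eq0 -ltNge lt_def un0 edot_ge0.
have h0 := sup_upper_bound (spnorm_hassup A).
have h : enorm (A *m ((enorm u)^-1 *: u)) <= spnorm A.
  apply: (h0 (enorm (A *m ((enorm u)^-1 *: u)))); exists ((enorm u)^-1 *: u) => //=.
  by rewrite enormZ ger0_norm ?invr_ge0 ?enorm_ge0 // mulVf // gt_eqF.
rewrite -scalemxAr enormZ ger0_norm ?invr_ge0 ?enorm_ge0 // in h.
by rewrite -ler_pdivrMr // mulrC.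
Qed.

End Vec.

Section Calc.
Context {R : realType} {d : nat}.

Lemma edot_differentiable (w y : 'cV[R]_d) : differentiable (fun u => edot w u) y.
Proof.
have -> : (fun u => edot w u) = \sum_(i < d) (fun u : 'cV[R]_d => w i 0 *: (u i 0 : R)).
  by rewrite fct_sumE; apply/funext => u.
apply: differentiable_sum => i.
apply: differentiableZ; exact: differentiable_coord.
Qed.

Lemma edot_diff (w y : 'cV[R]_d) :
  'd (fun u => edot w u) y = (fun u => edot w u) :> ('cV[R]_d -> R).
Proof.
have lin : linear (fun u : 'cV[R]_d => edot w u : R^o).
  by move=> a u v; rewrite edotDr edotZr.
pose EL : {linear 'cV[R]_d -> R^o} := HB.pack (fun u : 'cV[R]_d => edot w u : R^o) (GRing.isLinear.Build _ _ _ _ _ lin).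
have -> : (fun u => edot w u) = EL by [].
apply: diff_lin => z; apply: differentiable_continuous; exact: edot_differentiable.
Qed.

End Calc.


Section S.
Variable R : realFieldType.
Implicit Types a b e P N h M : R.

Lemma sqle {x y : R} : 0 <= y -> x ^+ 2 <= y ^+ 2 -> x <= y.
Proof. move=> hy h; nra. Qed.

Lemma R1a a b e P N : 0 <= a -> 0 <= b -> 0 <= N -> P^+2 <= a^+2 * N^+2 ->
  b^+2 = a^+2 - 2 * e * P + e^+2 * N^+2 -> (b - a)^+2 <= e^+2 * N^+2.
Proof.
move=> ha hb hN hP hb2.
have hab : 0 <= a * b by exact: mulr_ge0.
case: (lerP (a^+2 - e * P) 0) => hq.
  have -> : (b - a)^+2 = b^+2 - 2 * (a * b) + a^+2 by ring.
  lra.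
have h1 : (a^+2 - e * P)^+2 <= (a * b)^+2.
  have -> : (a * b)^+2 = a^+2 * b^+2 by ring.
  rewrite hb2.
  have -> : (a ^+ 2 - e * P) ^+ 2 = a^+4 - 2 * e * P * a^+2 + e^+2 * P^+2 by ring.
  have : e^+2 * P^+2 <= e^+2 * (a^+2 * N^+2) by apply: ler_wpM2l => //; exact: sqr_ge0.
  have -> : a ^+ 2 * (a ^+ 2 - 2 * e * P + e ^+ 2 * N ^+ 2) = a^+4 - 2 * e * P * a^+2 + e^+2 * (a^+2 * N^+2) by ring.
  lra.
have h2 := sqle hab h1.
have -> : (b - a)^+2 = b^+2 - 2 * (a * b) + a^+2 by ring.
lra.
Qed.

Lemma R1b a b e P N : 0 <= e -> 0 <= a -> 0 <= b -> 0 <= N -> P^+2 <= a^+2 * N^+2 ->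
  b^+2 = a^+2 - 2 * e * P + e^+2 * N^+2 -> b <= a + e * N.
Proof.
move=> he ha hb hN hP hb2.
have haN : 0 <= a * N by exact: mulr_ge0.
have hP' : - P <= a * N.
  apply: sqle => //; rewrite sqrrN exprMn //.
apply: sqle; first by have := mulr_ge0 he hN; lra.
rewrite hb2.
have -> : (a + e * N)^+2 = a^+2 + 2 * e * (a * N) + e^+2 * N^+2 by ring.
have : e * (- P) <= e * (a * N) by apply: ler_wpM2l.
lra.
Qed.

Lemma R1 a b e P N G0 S0 h M : 0 < M -> 0 < e -> e <= 1 -> 0 <= a -> 0 <= b -> 0 <= N ->
  P^+2 <= a^+2 * N^+2 ->
  b^+2 = a^+2 - 2 * e * P + e^+2 * N^+2 ->
  N^+2 = G0 + S0 + M / 2 * a * P ->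
  0 <= - e * G0 - e * S0 + e^+2 * h / 2 + M / 6 * (b^+3 - a^+3) ->
  e * N^+2 <= e^+2 * (`|h| / 2 + M / 6 * N^+2 * (3 * a + N)).
Proof.
move=> hM he he1 ha hb hN hP hb2 hQ H0.
have c1 : b^+3 - a^+3 = 3 * a / 2 * (b^+2 - a^+2) + (b - a)^+2 * (b + a / 2) by field.
have d1 := R1a a b e P N ha hb hN hP hb2.
have d2 := R1b a b e P N (ltW he) ha hb hN hP hb2.
have d3 : b + a / 2 <= 3 * a / 2 + N.
  have : e * N <= N by rewrite -[X in _ <= X]mul1r; apply: ler_wpM2r.
  lra.
have d4 : (b - a)^+2 * (b + a / 2) <= e^+2 * N^+2 * (3 * a / 2 + N).
  apply: le_trans (ler_wpM2r _ d1) _; first lra.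
  apply: ler_wpM2l => //; apply: mulr_ge0; exact: sqr_ge0.
have d5 : M / 6 * (b^+3 - a^+3) <= M / 6 * (3 * a / 2 * (- 2 * e * P + e^+2 * N^+2) + e^+2 * N^+2 * (3 * a / 2 + N)).
  apply: ler_wpM2l; first lra.
  rewrite c1 hb2; lra.
have d6 : M / 6 * (3 * a / 2 * (- 2 * e * P + e^+2 * N^+2) + e^+2 * N^+2 * (3 * a / 2 + N))
   = - e * (M / 2 * a * P) + e^+2 * (M / 6 * N^+2 * (3 * a + N)) by field.
have d7 : e^+2 * h / 2 <= e^+2 * (`|h| / 2).
  have : h <= `|h| by exact: ler_norm.
  have : 0 <= e^+2 by exact: sqr_ge0.
  nra.
have d8 : e * N^+2 = e * G0 + e * S0 + e * (M / 2 * a * P) by rewrite hQ; ring.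
have d9 : e ^+ 2 * (`|h| / 2 + M / 6 * N ^+ 2 * (3 * a + N)) = e^+2 * (`|h| / 2) + e^+2 * (M / 6 * N^+2 * (3 * a + N)) by ring.
lra.
Qed.

Lemma R2 Q K : 0 <= Q -> 0 <= K -> (forall e, 0 < e -> e <= 1 -> e * Q <= e^+2 * K) -> Q = 0.
Proof.
move=> hQ hK H.
case: (ltrgtP Q 0) => // hQ0; first lra.
pose e := Q / (Q + 2 * K + 1).
have hden : 0 < Q + 2 * K + 1 by lra.
have he : 0 < e by rewrite /e divr_gt0.
have he1 : e <= 1 by rewrite /e ler_pdivrMr // mul1r; lra.
have := H e he he1.
have -> : e^+2 * K = e * (e * K) by ring.
rewrite ler_pM2l //.
have : e * (Q + 2 * K + 1) = Q by rewrite /e divfK // gt_eqF.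
nra.
Qed.
End S.


Section Calc2.
Context {R : realType} {d : nat}.

Lemma dphi (grad : 'cV[R]_d -> 'cV[R]_d) (hess : 'cV[R]_d -> 'M[R]_d)
  (hg : forall y, differentiable grad y /\ ('d grad y : 'cV[R]_d -> 'cV[R]_d) = (fun h => hess y *m h))
  (w x s : 'cV[R]_d) (t : R) :
  is_derive t 1 (fun t : R => edot w (grad (x + t *: s))) (edot w (hess (x + t *: s) *m s)).
Proof.
pose p := fun t : R => x + t *: s.
have dp : is_diff t p ( *:%R^~ s).
  have -> : p = cst x + ( *:%R^~ s) by apply/funext.
  have h := is_diffD (is_diff_cst x t) (is_diff_scalel t s).
  apply: (is_diff_eq h).
  by apply/funext => h' /=; rewrite add0r.
have pd : differentiable p t by case: dp.
have gd : differentiable grad (p t) by case: (hg (p t)).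
have -> : (fun t : R => edot w (grad (x + t *: s))) = (fun u => edot w u) \o (grad \o p) by [].
have cd : differentiable (grad \o p) t by apply: differentiable_comp.
have ed : differentiable (fun u => edot w u) ((grad \o p) t) by exact: edot_differentiable.
apply: DeriveDef.
  by apply: diff_derivable; apply: differentiable_comp.
rewrite deriveE; last by apply: differentiable_comp.
rewrite diff_comp // edot_diff diff_comp //.
have [_ ->] := dp.
by case: (hg (p t)) => _ ->; rewrite /= scale1r.
Qed.


Lemma taylor (grad : 'cV[R]_d -> 'cV[R]_d) (hess : 'cV[R]_d -> 'M[R]_d)
  (hg : forall y, differentiable grad y /\ ('d grad y : 'cV[R]_d -> 'cV[R]_d) = (fun h => hess y *m h))
  (K : R) (hK : 0 <= K)
  (hL : forall u v, spnorm (hess u - hess v) <= K * enorm (u - v)) (x s : 'cV[R]_d) :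
  enorm (grad (x + s) - grad x - hess x *m s) <= K / 2 * enorm s ^+ 2.
Proof.
set e := grad (x + s) - grad x - hess x *m s.
pose c1 := edot e (hess x *m s).
pose c2 := K / 2 * enorm s ^+ 2 * enorm e.
pose phi := fun t : R => edot e (grad (x + t *: s)).
pose psi := phi - c1 \*: (id : R -> R) - c2 \*: ((id : R -> R) * (id : R -> R)).
pose df := fun t : R => edot e (hess (x + t *: s) *m s) - c1 *: 1 - c2 *: (t *: 1 + t *: 1).
have dpsi (t : R) : is_derive t (1 : R) psi (df t).
  have h := (is_deriveB (is_deriveB (dphi grad hess hg e x s t) (is_deriveZ c1 (is_derive_id t 1)))
           (is_deriveZ c2 (is_deriveM (is_derive_id t 1) (is_derive_id t 1)))).
  exact: h.
have cont : {within `[0, 1], continuous psi}.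
  by apply: derivable_within_continuous => t _; case: (dpsi t).
have [c /andP [c0 c1le] hc] := MVT_segment ler01 (fun t _ => dpsi t) cont.
have e1 : psi 1 - psi 0 = edot e e - c2.
  rewrite /psi /phi !fctE /= scale1r scale0r addr0.
  have ee : edot e e = edot e (grad (x+s)) - edot e (grad x) - c1 by rewrite {2}/e !edotBr.
  have hA (r : R) : r%:A = r by rewrite /GRing.scale /= mulr1.
  have hZ (r q : R) : r *: q = r * q by [].
  rewrite ee hA !hZ; lra.
have hA (r : R) : r%:A = r by rewrite /GRing.scale /= mulr1.
have hZ (r q : R) : r *: q = r * q by [].
have hB : edot e (hess (x + c *: s) *m s) - c1 <= enorm e * (K * (c * enorm s)) * enorm s.
  rewrite /c1 -edotBr -mulmxBl.
  apply: le_trans (edot_le _ _) _.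
  rewrite -mulrA; apply: ler_wpM2l; first exact: enorm_ge0.
  apply: le_trans (spnorm_le _ _) _.
  apply: ler_wpM2r; first exact: enorm_ge0.
  apply: le_trans (hL _ _) _.
  by rewrite addrAC subrr add0r enormZ ger0_norm.
have hc2 : c2 * (c + c) = enorm e * (K * (c * enorm s)) * enorm s by rewrite /c2; field.
rewrite e1 /df hA !hZ subr0 !mulr1 hc2 in hc.
have h3 : edot e e <= c2 by lra.
rewrite -enorm_sq /c2 in h3.
have hA0 : 0 <= K / 2 * enorm s ^+ 2 by rewrite mulr_ge0 ?divr_ge0 ?sqr_ge0.
have := enorm_ge0 e.
nra.
Qed.

End Calc2.


Section Opt.
Context {R : realType} {d : nat}.

Lemma norm_sub_sq (s c : 'cV[R]_d) (e : R) :
  enorm (s - e *: c) ^+ 2 = enorm s ^+ 2 - 2 * e * edot s c + e ^+ 2 * enorm c ^+ 2.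
Proof. rewrite !enorm_sq !edotBl !edotBr !edotZl !edotZr (edotC c s); ring. Qed.

Lemma Omega_shift (M : R) (g : 'cV[R]_d) (H : 'M[R]_d) (hH : H^T = H) (x xp c : 'cV[R]_d) (e : R) :
  Omega M g H (xp - e *: c) x = Omega M g H xp x - e * edot g c - e * edot (H *m (xp - x)) c
    + e ^+ 2 * edot (H *m c) c / 2 + M / 6 * (enorm (xp - x - e *: c) ^+ 3 - enorm (xp - x) ^+ 3).
Proof.
rewrite /Omega; have -> : xp - e *: c - x = (xp - x) - e *: c by rewrite addrAC.
move: (xp - x) => s.
have hsym : edot (H *m c) s = edot (H *m s) c by rewrite edot_mulmx hH edotC.
rewrite mulmxBr -scalemxAr !edotBl !edotBr !edotZl !edotZr hsym.
by field.
Qed.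

Lemma optimality (M : R) (hM : 0 < M) (g : 'cV[R]_d) (H : 'M[R]_d) (hH : H^T = H)
  (x xp : 'cV[R]_d) :
  (forall y, Omega M g H xp x <= Omega M g H y x) ->
  g + H *m (xp - x) + (M / 2 * enorm (xp - x)) *: (xp - x) = 0.
Proof.
move=> hopt.
set s := xp - x; set a := enorm s.
set c := g + H *m s + (M / 2 * a) *: s.
apply: edot_eq0.
have hQ : enorm c ^+ 2 = edot g c + edot (H *m s) c + M / 2 * a * edot s c.
  rewrite enorm_sq; have -> : edot c c = edot (g + H *m s + (M / 2 * a) *: s) c by [].
  rewrite edotDl.
  rewrite edotDl edotZl. done.
have hP : edot s c ^+ 2 <= a ^+ 2 * enorm c ^+ 2 by rewrite !enorm_sq edot_CS.
rewrite -enorm_sq; apply/eqP; rewrite sqrf_eq0; apply/eqP.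
suff : enorm c ^+ 2 = 0 by move/eqP; rewrite sqrf_eq0 => /eqP.
apply: (@R2 R (enorm c ^+ 2) (`|edot (H *m c) c| / 2 + M / 6 * enorm c ^+ 2 * (3 * a + enorm c))).
- exact: sqr_ge0.
- have := enorm_ge0 c; have := enorm_ge0 s; rewrite -/a => ha hc.
  apply: addr_ge0; first by rewrite divr_ge0.
  have h3 : 0 <= 3 * a + enorm c by lra.
  have h6 : 0 <= M / 6 by rewrite divr_ge0 // ltW.
  by rewrite mulr_ge0 // mulr_ge0 // sqr_ge0.
move=> e he he1.
have hy := hopt (xp - e *: c).
rewrite Omega_shift // -/s -/a in hy.
have hb2 := norm_sub_sq s c e; rewrite -/a in hb2.
apply: (@R1 R a (enorm (s - e *: c)) e (edot s c) (enorm c) (edot g c) (edot (H *m s) c) (edot (H *m c) c) M hM he he1) => //.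
- exact: enorm_ge0.
- exact: enorm_ge0.
- exact: enorm_ge0.
- lra.
Qed.
End Opt.


Lemma amgm3 {R : realFieldType} (X Y : R) : 0 <= X -> 0 <= Y ->
  27 * (X * Y^+2) <= 4 * X^+3 + 27 * Y^+3.
Proof.
move=> hX hY.
have h1 : 0 <= (3 * Y - 2 * X)^+2 * (3 * Y + X).
  apply: mulr_ge0; [exact: sqr_ge0| lra].
have e : (3 * Y - 2 * X)^+2 * (3 * Y + X) = 4 * X^+3 + 27 * Y^+3 - 27 * (X * Y^+2) by ring.
lra.
Qed.
Lemma key (R : realFieldType) (X Y Z b : R) : 0 <= X -> 0 <= Y -> 0 <= Z -> 0 <= b ->
  X^+2 <= Y^+2 + Z^+2 + b * Y -> X^+3 <= 3 * Y^+3 + 2 * Z^+3 + b^+3.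
Proof.
move=> hX hY hZ hb hS.
have h0 : 2 * (b * Y) <= b^+2 + Y^+2.
  have : 0 <= (b - Y)^+2 by exact: sqr_ge0.
  have -> : (b - Y)^+2 = b^+2 + Y^+2 - 2 * (b * Y) by ring.
  lra.
have h1 : 2 * X^+3 <= X * (3 * Y^+2 + 2 * Z^+2 + b^+2).
  have -> : 2 * X^+3 = X * (2 * X^+2) by ring.
  apply: ler_wpM2l => //; lra.
have := amgm3 X Y hX hY; have := amgm3 X Z hX hZ; have := amgm3 X b hX hb.
have : 0 <= Y^+3 by exact: exprn_ge0.
have : 0 <= Z^+3 by exact: exprn_ge0.
have : 0 <= b^+3 by exact: exprn_ge0.
have e : X * (3 * Y^+2 + 2 * Z^+2 + b^+2) = 3 * (X * Y^+2) + 2 * (X * Z^+2) + X * b^+2 by ring.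
rewrite e in h1.
lra.
Qed.

Lemma ab (R : comRingType) d (X a g b hh k : 'cV[R]_d) :
  X = (X - a - b) + (a - g) + (b - hh) - k + (g + hh + k).
Proof. apply/matrixP => i j; rewrite !mxE; ring. Qed.

Lemma pow32 (R : realType) (z : R) : 0 <= z -> z `^ (3 / 2) = Num.sqrt z ^+ 3.
Proof.
move=> hz.
have -> : (3 / 2 : R) = 1 + 2^-1 by field.
rewrite powRD; last by apply/implyP => /eqP h; exfalso; move: h; lra.
rewrite powRr1 // powR12_sqrt //.
by rewrite -{1}(sqr_sqrtr hz) -exprSr.
Qed.

Theorem mainTheorem2 (R : realType) (d : nat) (f : 'cV[R]_d -> R)
  (grad : 'cV[R]_d -> 'cV[R]_d) (hess : 'cV[R]_d -> 'M[R]_d) (L M : R)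
  (x g xplus : 'cV[R]_d) (H : 'M[R]_d) :
  is_gradient f grad ->
  is_hessian grad hess ->
  (forall u v, spnorm (hess u - hess v) <= L * enorm (u - v)) ->
  H^T = H ->
  0 < M -> L <= M ->
  (forall y, Omega M g H xplus x <= Omega M g H y x) ->
  let r := enorm (xplus - x) in
  (Num.sqrt M)^-1 * enorm (grad xplus) `^ (3 / 2)
  <= 3 * M * r ^+ 3 + 2 / Num.sqrt M * enorm (grad x - g) `^ (3 / 2)
     + (M ^+ 2)^-1 * spnorm (hess x - H) ^+ 3.
Proof.
move=> _ hhess hL hH hM hLM hopt /=.
set r := enorm (xplus - x).
have hLM' : forall u v, spnorm (hess u - hess v) <= M * enorm (u - v).
  move=> u v; apply: le_trans (hL u v) _; apply: ler_wpM2r => //; exact: enorm_ge0.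
set s := xplus - x.
have ht := taylor grad hess hhess M (ltW hM) hLM' x s.
have hx : x + s = xplus by rewrite /s addrC subrK.
rewrite hx in ht.
have ho := optimality M hM g H hH x xplus hopt; rewrite -/s -/r in ho.
set k := M / 2 * r.
set al := enorm (grad x - g); set be := spnorm (hess x - H).
set G := enorm (grad xplus).
have hG : G <= M * r ^+ 2 + al + be * r.
  have E := ab _ _ (grad xplus) (grad x) g (hess x *m s) (H *m s) (k *: s).
  rewrite ho addr0 -mulmxBl in E.
  rewrite /G E.
  have h1 := enormD (grad xplus - grad x - hess x *m s + (grad x - g) + (hess x - H) *m s) (- (k *: s)).
  have h2 := enormD (grad xplus - grad x - hess x *m s + (grad x - g)) ((hess x - H) *m s).
  have h3 := enormD (grad xplus - grad x - hess x *m s) (grad x - g).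
  have h4 := spnorm_le (hess x - H) s.
  have hr : 0 <= r by exact: enorm_ge0.
  have h5 : enorm (- (k *: s)) = k * r by rewrite enormN enormZ ger0_norm // /k mulr_ge0 // divr_ge0 // ltW.
  rewrite -/al -/be -/r h5 in h1 h2 h3 h4 *.
  have hk : k * r = M / 2 * r ^+ 2 by rewrite /k; ring.
  rewrite -/r in ht.
  lra.
have hr : 0 <= r by exact: enorm_ge0.
have hal : 0 <= al by exact: enorm_ge0.
have hbe : 0 <= be by exact: spnorm_ge0.
have hG0 : 0 <= G by exact: enorm_ge0.
rewrite !pow32 // -/G -/al.
set m := Num.sqrt M.
have hm : 0 < m by rewrite sqrtr_gt0.
have hm0 : m != 0 by rewrite gt_eqF.
have hmM : m ^+ 2 = M by rewrite sqr_sqrtr // ltW.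
set q := Num.sqrt G; set p := Num.sqrt al.
have hq : q ^+ 2 = G by rewrite sqr_sqrtr.
have hp : p ^+ 2 = al by rewrite sqr_sqrtr.
have hq0 : 0 <= q by exact: sqrtr_ge0.
have hp0 : 0 <= p by exact: sqrtr_ge0.
have cond : (m * q) ^+ 2 <= (m ^+ 2 * r) ^+ 2 + (m * p) ^+ 2 + be * (m ^+ 2 * r).
  have -> : (m * q) ^+ 2 = M * G by rewrite exprMn hmM hq.
  have -> : (m ^+ 2 * r) ^+ 2 + (m * p) ^+ 2 + be * (m ^+ 2 * r) = M * (M * r ^+ 2 + al + be * r).
    by rewrite !exprMn hmM hp; ring.
  by apply: ler_wpM2l => //; exact: ltW.
have K := key _ _ _ _ _ (mulr_ge0 (ltW hm) hq0) (mulr_ge0 (exprn_ge0 2 (ltW hm)) hr) (mulr_ge0 (ltW hm) hp0) hbe cond.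
have e1 : m^-1 * q ^+ 3 = (m ^+ 4)^-1 * (m * q) ^+ 3 by field.
have e2 : 3 * M * r ^+ 3 + 2 / m * p ^+ 3 + (M ^+ 2)^-1 * be ^+ 3
  = (m ^+ 4)^-1 * (3 * (m ^+ 2 * r) ^+ 3 + 2 * (m * p) ^+ 3 + be ^+ 3).
  by rewrite -hmM; field.
rewrite e1 e2; apply: ler_wpM2l => //.
by rewrite invr_ge0 exprn_ge0 // ltW.
Qed.
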